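(* Let $(G,I,O)$ be a geometry with $n = \lvert V(G)\rvert$ and $k = \lvert O \rvert$. If $(G,I,O)$ has a causal flow, then $\lvert E(G)\rvert \le kn - \binom{k+1}{2}$. Moreover, for any $n \ge k \ge 1$ and any integer partition $n_1 \le n_2 \le \cdots \le n_k$ of $n$ into positive parts, the geometry $(G,I,O)$ with $G = G(n_1,\ldots,n_k)$, $I = \{v_{i,1}\}_{i=1}^k$ and $O = \{v_{i,n_i}\}_{i=1}^k$ has a causal flow and satisfies $\lvert E(G)\rvert = kn - \binom{k+1}{2}$.
   Context: A geometry is a triple $(G,I,O)$ where $G$ is a finite simple undirected graph and $I, O \subseteq V(G)$ (not necessarily disjoint). Write $O^{\mathsf c} = V(G)\setminus O$, $I^{\mathsf c} = V(G) \setminus I$, and $x \sim y$ for adjacency in $G$. A causal flow on $(G,I,O)$ is a pair $(f,\preceq)$ with a function $f: O^{\mathsf c} \to I^{\mathsf c}$ and a partial order $\preceq$ on $V(G)$ such that for all $x \in O^{\mathsf c}$ and $y \in V(G)$: (1) $x \sim f(x)$; (2) $x \preceq f(x)$; (3) if $y \sim f(x)$ then $x \preceq y$. The graph $G(n_1,\ldots,n_k)$: for each $1 \le i \le k$ it contains a path $v_{i,1} v_{i,2} \cdots v_{i,n_i}$ on $n_i$ new vertices (edges $v_{i,a}v_{i,a+1}$ for $1 \le a < n_i$), and additionally, for each $1 \le i < j \le k$, the following edges: (i) if $n_i > 1$, the edge $v_{i,a}v_{j,a}$ for each $1 \le a < n_i$; (ii) if $n_j > 1$, the edge $v_{i,a+1}v_{j,a}$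 for each $1 \le a < n_i$; (iii) the edge $v_{i,n_i}v_{j,a}$ for each $n_i \le a \le n_j$. *)

(* Defs.v *)
From mathcomp Require Import all_boot.
Unset Printing Implicit Defensive.

Definition simple_graph {T : finType} (e : rel T) : Prop :=
  symmetric e /\ irreflexive e.

Definition edges {T : finType} (e : rel T) : {set {set T}} :=
  [set A : {set T} | [exists x, exists y, e x y && (A == [set x; y])]].

Definition partial_order {T : finType} (le : rel T) : Prop :=
  reflexive le /\ (forall x y, le x y -> le y x -> x = y) /\ transitive le.

(* (f, le) is a causal flow on (G,I,O); f is given as a total function on T
   but only its restriction to O^c is constrained (and must land in I^c). *)
Definition is_causal_flow {T : finType} (e : rel T) (I O : {set T})
    (f : T -> T) (le : rel T) : Prop :=
  partial_order le /\
  forall x, x \notin O ->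
    [/\ f x \notin I, e x (f x), le x (f x) & forall y, e y (f x) -> le x y].

Definition has_causal_flow {T : finType} (e : rel T) (I O : {set T}) : Prop :=
  exists (f : T -> T) (le : rel T), is_causal_flow e I O f le.

(* The graph G(n_1,...,n_k), for ns = [:: n_1; ...; n_k].
   Row indices i are 0-based ('I_k), positions a are 1-based: vertex
   v_{i,a} is the pair (i, a) with 1 <= a <= n_i. *)
Definition gvert_pred (ns : seq nat) (p : 'I_(size ns) * 'I_(sumn ns).+1) : bool :=
  (1 <= p.2) && (p.2 <= nth 0 ns p.1).

Definition gvert (ns : seq nat) := {p : 'I_(size ns) * 'I_(sumn ns).+1 | gvert_pred ns p}.

Definition row {ns : seq nat} (v : gvert ns) : nat := (val v).1.
Definition pos {ns : seq nat} (v : gvert ns) : nat := (val v).2.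

Definition gadj_dir {ns : seq nat} (x y : gvert ns) : bool :=
  let i := row x in let a := pos x in let j := row y in let b := pos y in
  let ni := nth 0 ns i in let nj := nth 0 ns j in
  ((i == j) && (b == a.+1))
  || ((i < j) &&
      [|| (* (i) v_{i,a} v_{j,a}, 1 <= a < n_i, if n_i > 1 *)
          [&& 1 < ni, a == b, 1 <= a & a < ni],
          (* (ii) v_{i,c+1} v_{j,c}, 1 <= c < n_i, if n_j > 1 *)
          [&& 1 < nj, a == b.+1, 1 <= b & b < ni]
        | (* (iii) v_{i,n_i} v_{j,c}, n_i <= c <= n_j *)
          [&& a == ni, ni <= b & b <= nj]]).

Definition gadj (ns : seq nat) : rel (gvert ns) :=
  fun x y => gadj_dir x y || gadj_dir y x.

Definition gI (ns : seq nat) : {set gvert ns} := [set v | pos v == 1].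
Definition gO (ns : seq nat) : {set gvert ns} := [set v | pos v == nth 0 ns (row v)].

(* Main.v *)
Require Import Defs.
From mathcomp Require Import all_boot.
From mathcomp Require Import zify.
Set Warnings "-notation-overridden".


Section P1.
Variables (T : finType) (e : rel T) (O : {set T}) (f : T -> T) (le : rel T).
Hypothesis esym : symmetric e.
Hypothesis eirr : irreflexive e.
Hypothesis le_refl : reflexive le.
Hypothesis le_anti : forall x y, le x y -> le y x -> x = y.
Hypothesis le_tr : transitive le.
Hypothesis Hf : forall x, x \notin O ->
   [/\ e x (f x), le x (f x) & forall y, e y (f x) -> le x y].

Definition ES (S : {set T}) := [set A in edges e | A \subset S].

Lemma ES_split (S : {set T}) (v : T) : v \in S -> #|ES S| <= #|ES (S :\ v)| + #|[set w in S | e v w]|.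
Proof.
move=> vS.
have sub : ES S \subset ES (S :\ v) :|: ((fun w => [set v; w]) @: [set w in S | e v w]).
  apply/subsetP => A; rewrite !inE => /andP[HA AS].
  move: (HA) => /existsP[x /existsP[y /andP[exy /eqP EA]]].
  case vA: (v \in A).
    apply/orP; right; apply/imsetP.
    move: vA; rewrite EA !inE => /orP[/eqP vx|/eqP vy].
      exists y; last by rewrite -vx.
      rewrite inE vx exy andbT; apply: (subsetP AS); by rewrite EA !inE eqxx orbT.
    exists x; last by rewrite -vy setUC.
    rewrite inE vy esym exy andbT; apply: (subsetP AS); by rewrite EA !inE eqxx.
  apply/orP; left; rewrite HA /=; apply/subsetP => z zA.
  rewrite !inE (subsetP AS z zA) andbT; apply/eqP => zv; by rewrite -zv zA in vA.
apply: leq_trans (subset_leq_card sub) _.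
rewrite cardsU; apply: leq_trans (leq_subr _ _) _.
by rewrite leq_add2l leq_imset_card.
Qed.

Lemma f_inj : {in ~: O &, injective f}.
Proof.
move=> x y; rewrite !inE => xO yO fxy.
have [exf lxf Hx] := Hf _ xO; have [eyf lyf Hy] := Hf _ yO.
apply: le_anti; first by apply: Hx; rewrite fxy.
by apply: Hy; rewrite -fxy.
Qed.

Lemma min_exists (S : {set T}) : S != set0 ->
  exists2 v, v \in S & forall x, x \in S -> le x v -> x = v.
Proof.
case/set0Pn => v0 v0S.
pose c v := #|[set y in S | le y v]|.
have [v vS vmin] := @arg_minnP T v0 (fun v => v \in S) c v0S.
exists v => // x xS lxv.
apply/eqP; apply/negPn/negP => nxv.
have : c x < c v.
  apply: proper_card; rewrite properEneq; apply/andP; split.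
    apply/negP => /eqP E.
    have : v \in [set y in S | le y x] by rewrite E inE vS le_refl.
    rewrite inE vS /= => lvx.
    by move/negP: nxv; apply; apply/eqP; apply: le_anti.
  apply/subsetP => y; rewrite !inE => /andP[-> lyx] /=; exact: le_tr lyx lxv.
by rewrite ltnNge vmin.
Qed.

Lemma binle k : 'C(k.+1, 2) <= k * k.
Proof. elim: k => [|k IH] //. rewrite binS bin1. nia. Qed.

Lemma main1 m (S : {set T}) : #|S| = m ->
  (forall x, x \in S -> x \notin O -> f x \in S) ->
  #|ES S| <= #|O :&: S| * #|S| - 'C(#|O :&: S|.+1, 2).
Proof.
elim: m S => [|m IH] S cS clS.
  have -> : ES S = set0.
    apply/setP => A; rewrite !inE; apply/negP => /andP[HA AS].
    move: HA => /existsP[x /existsP[y /andP[_ /eqP EA]]].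
    have : x \in S by apply: (subsetP AS); rewrite EA !inE eqxx.
    by move/eqP: cS; rewrite cards_eq0 => /eqP ->; rewrite inE.
  by rewrite cards0.
have : S != set0 by rewrite -card_gt0 cS.
case/min_exists => v vS vmin.
have cS' : #|S :\ v| = m by move: cS; rewrite (cardsD1 v) vS add1n => -[].
have clS' : forall x, x \in S :\ v -> x \notin O -> f x \in S :\ v.
  move=> x; rewrite !inE => /andP[xv xS] xO; rewrite clS // andbT.
  apply/eqP => fxv; have [_ lxf _] := Hf _ xO.
  by move: lxf; rewrite fxv => /(vmin x xS) /eqP; rewrite (negbTE xv).
have IH' := IH _ cS' clS'.
have Hsplit := ES_split S v vS.
have kn : #|O :&: S| <= #|S| by apply: subset_leq_card; apply: subsetIr.
rewrite cS in kn *.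
case vO: (v \in O).
  have ck : #|O :&: S| = (#|O :&: (S :\ v)|).+1.
    rewrite (cardsD1 v) inE vO vS add1n; congr _.+1; apply: eq_card => z.
    by rewrite !inE; case: (z == v); rewrite ?andbF.
  have deg : #|[set w in S | e v w]| <= m.
    rewrite -cS'; apply: subset_leq_card; apply/subsetP => w; rewrite !inE.
    move=> /andP[wS evw]; rewrite wS andbT; apply/eqP => wv.
    by rewrite wv eirr in evw.
  rewrite ck in kn *; rewrite cS' in IH'.
  move: (#|O :&: (S :\ v)|) kn IH' => k kn IH'.
  have hc := binle k.
  have hC : 'C(k.+2, 2) = 'C(k.+1, 2) + k.+1 by rewrite [in LHS]binS bin1.
  rewrite hC; move: ('C(k.+1, 2)) hc IH' => c hc IH'; nia.
have ck : #|O :&: (S :\ v)| = #|O :&: S|.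
  apply: eq_card => z; rewrite !inE; case zv: (z == v); rewrite ?andbF //=.
  by rewrite (eqP zv) vO.
have kn' : #|O :&: S| <= m.
  rewrite -cS'; apply: subset_leq_card; apply/subsetP => z; rewrite !inE.
  move=> /andP[zO zS]; rewrite zS andbT; apply/eqP => zv; by rewrite -zv zO in vO.
pose D := S :\: O.
pose N := S :\: f @: D.
have fDS : f @: D \subset S.
  apply/subsetP => z /imsetP[x]; rewrite inE => /andP[xO xS] ->; exact: clS.
have cfD : #|f @: D| = #|D|.
  apply: card_in_imset => x y; rewrite !inE => /andP[xO _] /andP[yO _].
  apply: f_inj; by rewrite inE.
have cD : #|D| + #|O :&: S| = #|S|.
  by rewrite -(cardsID O S) setIC addnC.
have cN : #|N| = #|O :&: S|.
  rewrite /N cardsD (setIidPr fDS) cfD; lia.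
have vN : v \in N.
  rewrite inE vS andbT; apply/imsetP => -[x]; rewrite inE => /andP[xO xS] vfx.
  have [exf lxf _] := Hf _ xO.
  have xv : x = v by apply: vmin => //; rewrite vfx.
  by move: exf; rewrite -vfx xv eirr.
have deg : #|[set w in S | e v w]| <= #|O :&: S|.
  have sub : [set w in S | e v w] \subset f v |: (N :\ v).
    apply/subsetP => w; rewrite !inE => /andP[wS evw].
    case: eqP => //= wfv; rewrite wS andbT.
    have -> : (w != v) by apply/eqP => wv; rewrite wv eirr in evw.
    apply/imsetP => -[x]; rewrite inE => /andP[xO xS] wfx.
    have [_ _ Hy] := Hf _ xO.
    have xv : x = v by apply: vmin => //; apply: Hy; rewrite -wfx.
    by apply: wfv; rewrite wfx xv.
  apply: leq_trans (subset_leq_card sub) _.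
  rewrite cardsU1; move: (cardsD1 v N); rewrite vN cN.
  case: (f v \in N :\ v) => /=; lia.
rewrite ck cS' in IH'.
move: (#|O :&: S|) kn' IH' deg => k kn' IH' deg.
have hc := binle k; move: ('C(k.+1, 2)) hc IH' => c hc IH'; nia.
Qed.

End P1.

Lemma part1 (T : finType) (e : rel T) (I O : {set T}) :
      simple_graph e -> has_causal_flow e I O ->
      #|edges e| <= #|O| * #|T| - 'C(#|O|.+1, 2).
Proof.
move=> [esym eirr] [f [le [[lr [la lt]] Hf]]].
have Hf' : forall x, x \notin O ->
   [/\ e x (f x), le x (f x) & forall y, e y (f x) -> le x y].
  by move=> x xO; have [_ ? ? ?] := Hf x xO; split.
have H := @main1 T e O f le esym eirr lr la lt Hf' _ [set: T] erefl.
have -> : edges e = @ES T e [set: T].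
  by apply/setP => A; rewrite /ES !inE subsetT andbT.
rewrite -{1 2}(setIT O) -cardsT; by apply: H => x; rewrite !inE.
Qed.




Lemma sum_eq1 M (c : nat) (p : bool) : \sum_(b < M) ((b == c :> nat) && p : nat) = ((c < M) && p).
Proof.
elim: M => [|M IH]; first by rewrite big_ord0.
rewrite big_ord_recr /= IH; lia.
Qed.

Lemma sum_int M (q : bool) (lo hi : nat) :
  \sum_(b < M) (q && (lo <= b) && (b <= hi) : nat) = q * (minn M hi.+1 - lo).
Proof.
elim: M => [|M IH]; first by rewrite big_ord0; case: q.
rewrite big_ord_recr /= IH; case: q IH => /= IH; lia.
Qed.

Definition DNn (i a j b ni nj : nat) : bool :=
 ((i == j) && (b == a.+1)) || ((i < j) && [|| [&& 1 < ni, a == b, 1 <= a & a < ni],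
   [&& 1 < nj, a == b.+1, 1 <= b & b < ni] | [&& a == ni, ni <= b & b <= nj]]).

Lemma pw i j ni nj a b : 0 < ni ->
  (i < j -> ni <= nj) -> (i == j -> ni = nj) ->
  (((1 <= a) && (a <= ni)) && ((1 <= b) && (b <= nj))
       && DNn i a j b ni nj : nat) =
      ((b == a) && ((i < j) && (1 < ni) && (1 <= a) && (a < ni)) : nat)
    + ((b == a.-1) && ((i < j) && (2 <= a) && (a <= ni)) : nat)
    + (((i < j) && (a == ni)) && (ni <= b) && (b <= nj) : nat)
    + ((b == a.+1) && ((i == j) && (1 <= a) && (a.+1 <= ni)) : nat).
Proof.
move=> ni0 hlt heq; rewrite /DNn.
case: (ltngtP i j) => h /=.
- have {}hlt := hlt h.
  case: (ltngtP a ni) => ha /=; lia.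
- lia.
- rewrite h eqxx in heq; rewrite (heq erefl) /=; lia.
Qed.

Definition Hn (i j ni nj : nat) : nat :=
  if i == j then ni - 1 else if i < j then ni + nj - 1 else 0.

Lemma count_pair M i j ni nj : 0 < ni -> ni < M -> nj < M ->
  (i < j -> ni <= nj) -> (i == j -> ni = nj) ->
  \sum_(a < M) \sum_(b < M) (((1 <= a) && (a <= ni)) && ((1 <= b) && (b <= nj))
       && DNn i a j b ni nj : nat) = Hn i j ni nj.
Proof.
move=> ni0 niM njM hlt heq.
have step1 : forall a : 'I_M, \sum_(b < M) (((1 <= a) && (a <= ni)) && ((1 <= b) && (b <= nj))
       && DNn i a j b ni nj : nat) =
   ((i < j) && (1 <= a) && (a <= ni.-1) : nat) + ((i < j) && (2 <= a) && (a <= ni) : nat)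
   + ((a == ni :> nat) && (i < j)) * (nj.+1 - ni) + ((i == j) && (1 <= a) && (a <= ni.-1) : nat).
  move=> a.
  have pw' : forall b : 'I_M, _ := fun b => pw i j ni nj a b ni0 hlt heq.
  rewrite (eq_bigr _ (fun b _ => pw' b)) !big_split /= !sum_eq1 sum_int.
  have -> : minn M nj.+1 = nj.+1 by lia.
  have := ltn_ord a; move: (a : nat) => x hx.
  case: (i < j) => /=; case: (i == j) => /=; case: (x == ni) => /=; lia.
rewrite (eq_bigr _ (fun a _ => step1 a)) !big_split /= !sum_int -big_distrl /=.
rewrite (eq_bigr (fun a : 'I_M => ((a == ni :> nat) && (i < j) : nat)));
  last by move=> a _.
rewrite sum_eq1 /Hn.
case: (ltngtP i j) => h /=.
- have := hlt h; lia.
- lia.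
- rewrite h in heq; have := heq (eqxx _); lia.
Qed.

Lemma sumH (nu : nat -> nat) k : (forall i, i < k -> 0 < nu i) ->
  \sum_(i < k) \sum_(j < k) Hn i j (nu i) (nu j) + 'C(k.+1, 2) = k * \sum_(i < k) nu i.
Proof.
elim: k => [|k IH] hpos; first by rewrite !big_ord0.
have hpos' : forall i, i < k -> 0 < nu i by move=> i hi; apply: hpos; lia.
have IH' := IH hpos'.
rewrite big_ord_recr /=.
have e1 : \sum_(i < k) \sum_(j < k.+1) Hn i j (nu i) (nu j) =
   \sum_(i < k) \sum_(j < k) Hn i j (nu i) (nu j) + \sum_(i < k) (nu i + (nu k - 1)).
  rewrite -big_split; apply: eq_bigr => i _; rewrite big_ord_recr /= /Hn.
  have hi := ltn_ord i; have := hpos i (ltnW hi).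
  rewrite (ltn_eqF hi) hi; have := hpos k (ltnSn k); lia.
have e2 : \sum_(j < k.+1) Hn k j (nu k) (nu j) = nu k - 1.
  rewrite big_ord_recr /= big1 ?add0n; first by rewrite /Hn eqxx.
  move=> j _; have hj := ltn_ord j; rewrite /Hn.
  rewrite eq_sym (ltn_eqF hj) ltnNge ltnW //.
have e3 : \sum_(i < k) (nu i + (nu k - 1)) = \sum_(i < k) nu i + k * (nu k - 1).
  by rewrite big_split /= sum_nat_const card_ord.
have hb : 'C(k.+2, 2) = 'C(k.+1, 2) + k.+1 by rewrite [in LHS]binS bin1.
rewrite e1 e2 e3 hb [in RHS]big_ord_recr /=.
have := hpos k (ltnSn k).
move: IH'; move: (\sum_(i < k) \sum_(j < k) Hn i j (nu i) (nu j)) ('C(k.+1, 2)) (\sum_(i < k) nu i) (nu k).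
move=> A C S w IH' hw; nia.
Qed.


Lemma nth_le_sumn (s : seq nat) i : nth 0 s i <= sumn s.
Proof. elim: s i => [|x s IH] [|i] //=; [lia | have := IH i; lia]. Qed.

Lemma card_set_sum (T : finType) (P : pred T) : #|[set x | P x]| = \sum_x (P x : nat).
Proof.
rewrite -sum1_card big_mkcond /=; apply: eq_bigr => x _; rewrite inE; by case: (P x).
Qed.

Lemma edges_dir (T : finType) (d : rel T) : (forall x y, d x y -> ~~ d y x) ->
  #|edges (fun x y => d x y || d y x)| = #|[set p : T * T | d p.1 p.2]|.
Proof.
move=> anti.
have irr : forall x, ~~ d x x.
  by move=> x; apply/negP => h; move: (anti _ _ h); rewrite h.
have -> : edges (fun x y => d x y || d y x) =
    (fun p : T * T => [set p.1; p.2]) @: [set p : T * T | d p.1 p.2].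
  apply/setP => A; rewrite /edges inE; apply/existsP/imsetP.
    case=> x /existsP[y /andP[/orP[h|h] /eqP ->]].
      by exists (x, y) => //; rewrite inE.
    by exists (y, x); [rewrite inE | rewrite /= setUC].
  case=> [[x y]]; rewrite inE /= => h ->.
  by exists x; apply/existsP; exists y; rewrite h eqxx.
apply: card_in_imset => [[x y] [x' y']]; rewrite !inE /= => h h' E.
have xin : x \in [set x'; y'] by rewrite -E !inE eqxx.
have yin : y \in [set x'; y'] by rewrite -E !inE eqxx orbT.
move: xin yin; rewrite !inE => /orP[/eqP ex|/eqP ex] /orP[/eqP ey|/eqP ey]; subst.
- by move: (irr x'); rewrite h.
- by [].
- by move: (anti _ _ h); rewrite h'.
- by move: (irr y'); rewrite h.
Qed.

Section G.
Variable ns : seq nat.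

Definition rk (v : gvert ns) : nat :=
  if pos v == nth 0 ns (row v) then (sumn ns).+1 * size ns else pos v * size ns + row v.
Definition gle : rel (gvert ns) := fun x y => (x == y) || (rk x < rk y).
Definition gf (v : gvert ns) : gvert ns := insubd v ((val v).1, inord (pos v).+1).

Lemma gvert_eq (x y : gvert ns) : row x = row y -> pos x = pos y -> x = y.
Proof.
move=> h1 h2; apply: val_inj; move: h1 h2; rewrite /row /pos.
case: (val x) => [i a]; case: (val y) => [j b] /= h1 h2.
by congr pair; apply: val_inj.
Qed.

Lemma posP (x : gvert ns) : (1 <= pos x) && (pos x <= nth 0 ns (row x)).
Proof. exact: (valP x). Qed.

Lemma rowP (x : gvert ns) : row x < size ns.
Proof. exact: ltn_ord. Qed.

Lemma gf_val x : pos x != nth 0 ns (row x) -> row (gf x) = row x /\ pos (gf x) = (pos x).+1.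
Proof.
move=> hx.
have hp : gvert_pred ns ((val x).1, inord (pos x).+1 : 'I_(sumn ns).+1).
  change ((1 <= (inord (pos x).+1 : 'I_(sumn ns).+1)) &&
     ((inord (pos x).+1 : 'I_(sumn ns).+1) <= nth 0 ns (row x))).
  have := posP x; have := nth_le_sumn ns (row x).
  move=> h1 h2; rewrite inordK; lia.
rewrite /gf /row /pos insubdK //=.
split => //; rewrite inordK //; move: (posP x) (nth_le_sumn ns (row x)) hx; rewrite /row /pos /=; lia.
Qed.

Lemma gflow : has_causal_flow (gadj ns) (gI ns) (gO ns).
Proof.
exists gf, gle; split.
  split; first by move=> x; rewrite /gle eqxx.
  split.
    move=> x y; rewrite /gle; case: eqP => [->|_] //=; case: eqP => [->|_] //= h1 h2; lia.
  move=> y x z; rewrite /gle; case/orP=> [/eqP->|h1] //; case/orP => [/eqP<-|h2];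
    rewrite ?h1 ?orbT //; apply/orP; right; lia.
move=> x; rewrite inE => hx.
have [r1 p1] := gf_val x hx.
have hp := posP x; have hr := rowP x; have hN := nth_le_sumn ns (row x).
split.
- by rewrite inE p1; lia.
- by rewrite /gadj /gadj_dir r1 p1 !eqxx.
- apply/orP; right; rewrite /rk (negbTE hx) r1 p1; case: ifP => _; nia.
- move=> y; rewrite /gadj /gadj_dir r1 p1 => hy.
  rewrite /gle; case: (eqVneq x y) => [//|nxy] /=.
  have nn : ~ (row y = row x /\ pos y = pos x).
    by case=> h1 h2; move/eqP: nxy; apply; apply: gvert_eq.
  have hpy := posP y; have hry := rowP y; have hNy := nth_le_sumn ns (row y).
  rewrite /rk (negbTE hx); case: ifP => hyO; first nia.
  have lex : pos x < pos y \/ (pos x = pos y /\ row x < row y) by lia.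
  nia.
Qed.

Lemma dir_shape (x y : gvert ns) : gadj_dir x y ->
  (row x < row y) || ((row x == row y) && (pos y == (pos x).+1)).
Proof.
rewrite /gadj_dir /=; case/orP => [h|/andP[-> _] //]; by rewrite h orbT.
Qed.

Lemma dir_anti (x y : gvert ns) : gadj_dir x y -> ~~ gadj_dir y x.
Proof.
move=> h; apply/negP => h'; have := dir_shape x y h; have := dir_shape y x h'; lia.
Qed.

Lemma sum_gvert (G : 'I_(size ns) * 'I_(sumn ns).+1 -> nat) :
  \sum_(x : gvert ns) G (val x) = \sum_p (gvert_pred ns p : nat) * G p.
Proof.
rewrite (eq_bigr (fun p => if gvert_pred ns p then G p else 0)); last first.
  by move=> p _; case: (gvert_pred ns p); rewrite ?mul1n ?mul0n.
rewrite -big_mkcond /=.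
rewrite (reindex_omap (val : gvert ns -> _) insub); last by move=> p hp; rewrite insubT.
apply: eq_bigl => x; symmetry; apply/andP; split; [exact: valP | by rewrite valK].
Qed.

Lemma card_dir : #|[set p : gvert ns * gvert ns | gadj_dir p.1 p.2]| =
  \sum_(i < size ns) \sum_(j < size ns) \sum_(a < (sumn ns).+1) \sum_(b < (sumn ns).+1)
   (((1 <= a) && (a <= nth 0 ns i)) && ((1 <= b) && (b <= nth 0 ns j))
     && DNn i a j b (nth 0 ns i) (nth 0 ns j) : nat).
Proof.
rewrite card_set_sum.
transitivity (\sum_(x : gvert ns) \sum_(y : gvert ns) (gadj_dir x y : nat)).
  by rewrite pair_bigA.
transitivity (\sum_(x : gvert ns) \sum_(q : 'I_(size ns) * 'I_(sumn ns).+1)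
   (gvert_pred ns q : nat) * (DNn (val x).1 (val x).2 q.1 q.2 (nth 0 ns (val x).1) (nth 0 ns q.1) : nat)).
  apply: eq_bigr => x _.
  exact: (sum_gvert (fun q => (DNn (val x).1 (val x).2 q.1 q.2 (nth 0 ns (val x).1) (nth 0 ns q.1) : nat))).
rewrite (sum_gvert (fun p => \sum_(q : 'I_(size ns) * 'I_(sumn ns).+1)
   (gvert_pred ns q : nat) * (DNn p.1 p.2 q.1 q.2 (nth 0 ns p.1) (nth 0 ns q.1) : nat))).
transitivity (\sum_(i < size ns) \sum_(a < (sumn ns).+1)
   (((1 <= a) && (a <= nth 0 ns i)) : nat) * \sum_(j < size ns) \sum_(b < (sumn ns).+1)
   ((((1 <= b) && (b <= nth 0 ns j)) : nat) * (DNn i a j b (nth 0 ns i) (nth 0 ns j) : nat))).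
  rewrite [RHS]pair_bigA; apply: eq_bigr => -[i a] _ /=.
  by rewrite [in RHS]pair_bigA.
apply: eq_bigr => i _.
rewrite exchange_big /=; apply: eq_bigr => a _.
rewrite big_distrr; apply: eq_bigr => j _.
rewrite big_distrr; apply: eq_bigr => b _.
by rewrite !mulnb /= mulnb !andbA.
Qed.

Lemma sumn_nth : sumn ns = \sum_(i < size ns) nth 0 ns i.
Proof. by rewrite sumnE (big_nth 0) big_mkord. Qed.

Lemma gedges : all (fun m => 0 < m) ns -> sorted leq ns ->
  #|edges (gadj ns)| + 'C((size ns).+1, 2) = size ns * sumn ns.
Proof.
move=> hpos hs.
rewrite /gadj (@edges_dir _ (@gadj_dir ns) dir_anti) card_dir.
have hp : forall i, i < size ns -> 0 < nth 0 ns i.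
  by move=> i hi; apply: (all_nthP 0 hpos).
rewrite (eq_bigr (fun i : 'I_(size ns) => \sum_(j < size ns) Hn i j (nth 0 ns i) (nth 0 ns j)));
  last first.
  move=> i _; apply: eq_bigr => j _; apply: count_pair.
  - exact: hp i (ltn_ord i).
  - by rewrite ltnS nth_le_sumn.
  - by rewrite ltnS nth_le_sumn.
  - move=> h; apply: (sorted_leq_nth leq_trans leqnn 0 hs); rewrite ?inE ?ltn_ord //.
    exact: ltnW.
  - by move/eqP => ->.
by rewrite (sumH (nth 0 ns) (size ns) hp) sumn_nth.
Qed.
End G.


Theorem theorem2 :
  (forall (T : finType) (e : rel T) (I O : {set T}),
      simple_graph e -> has_causal_flow e I O ->
      #|edges e| <= #|O| * #|T| - 'C(#|O|.+1, 2))
  /\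
  (forall (n k : nat) (ns : seq nat),
      1 <= k -> k <= n ->
      size ns = k -> all (fun m => 0 < m) ns -> sorted leq ns -> sumn ns = n ->
      has_causal_flow (gadj ns) (gI ns) (gO ns) /\
      #|edges (gadj ns)| = k * n - 'C(k.+1, 2)).
Proof.
split; first exact: part1.
move=> n k ns hk hkn hsz hpos hs hsum; split; first exact: gflow.
have := gedges ns hpos hs; subst k n; lia.
Qed.
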